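(* Let $k$ be any field and $d$ a positive integer. Then $$S_{d+1}(x_1,\ldots,x_{d+1})\equiv S_d(x_1,\ldots,x_d)\,x_{d+1}\equiv x_{d+1}\,S_d(x_1,\ldots,x_d)\pmod{R_1^{(d)}},$$ i.e. the pairwise differences of these three elements lie in $R_1^{(d)}$.
   Context: $X=\{x_1,x_2,\ldots\}$ is a countably infinite set and $k_0\langle X\rangle$ is the free associative $k$-algebra (without identity) on $X$. A $T$-space is a $k$-linear subspace closed under every algebra endomorphism of $k_0\langle X\rangle$; the $T$-space generated by a subset is the smallest $T$-space containing it. $S_d(v_1,\ldots,v_d)=\sum_{\sigma\in\Sigma_d}\prod_{i=1}^d v_{\sigma(i)}$, and $R_1^{(d)}$ is the $T$-space generated by $S_d(x_1,\ldots,x_d)$. *)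

(* Defs.v *)
From HB Require Import structures.
From mathcomp Require Import all_boot all_order all_algebra all_fingroup.
From mathcomp Require Import finmap.
From mathcomp Require Import monalg.

Set Implicit Arguments.
Unset Strict Implicit.
Unset Printing Implicit Defensive.

Import GRing.Theory.
Local Open Scope ring_scope.

(* k<X>: the free unital associative k-algebra on X = {x_0, x_1, ...},
   realized as finitely supported k-linear combinations of words
   (free monoid fmonom nat) with concatenation product. *)
Notation ncpoly k := {malg k[fmonom nat]}.

(* the variable x_i (0-based indexing) *)
Definition xvar (k : fieldType) (i : nat) : ncpoly k := << fmu i >>.

(* k_0<X>: the elements with zero constant term (no empty word) *)
Definition nonunital (k : fieldType) (p : ncpoly k) : Prop := mcoeff (@fmone nat) p = 0.

(* algebra endomorphism of k_0<X> (only its values on k_0<X> matter) *)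
Definition is_endo (k : fieldType) (phi : ncpoly k -> ncpoly k) : Prop :=
  (forall p, nonunital p -> nonunital (phi p)) /\
  (forall p q, nonunital p -> nonunital q -> phi (p + q) = phi p + phi q) /\
  (forall (c : k) p, nonunital p -> phi (c *: p) = c *: phi p) /\
  (forall p q, nonunital p -> nonunital q -> phi (p * q) = phi p * phi q).

Definition is_Tspace (k : fieldType) (V : ncpoly k -> Prop) : Prop :=
  (forall p, V p -> nonunital p) /\
  V 0 /\
  (forall p q, V p -> V q -> V (p + q)) /\
  (forall (c : k) p, V p -> V (c *: p)) /\
  (forall phi, is_endo phi -> forall p, V p -> V (phi p)).

Definition in_Tspace_gen (k : fieldType) (G : ncpoly k -> Prop) (f : ncpoly k)
  : Prop :=
  forall V, is_Tspace V -> (forall g, G g -> V g) -> V f.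

(* S_d(v_1,...,v_d) = sum over sigma in Sigma_d of v_{sigma(1)} ... v_{sigma(d)},
   with the v's given as a 0-indexed family v 0, ..., v (d-1) *)
Definition Ssym (k : fieldType) (d : nat) (v : nat -> ncpoly k) : ncpoly k :=
  \sum_(s : 'S_d) \prod_(i < d) v (s i : nat).

Definition R1 (k : fieldType) (d : nat) : ncpoly k -> Prop :=
  in_Tspace_gen (fun g => g = Ssym d (@xvar k)).

(* Main.v *)
Require Import Defs.
From HB Require Import structures.
From mathcomp Require Import all_boot all_order all_algebra all_fingroup.
From mathcomp Require Import finmap.
From mathcomp Require Import monalg.
Import GRing.Theory.
Local Open Scope ring_scope.
Set Implicit Arguments.
Unset Strict Implicit.

Section Endo.
Variable k : fieldType.
Local Notation R := (ncpoly k).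

Definition hw (v : nat -> R) (m : fmonom nat) : R := \prod_(i <- (m : seq nat)) v i.

Lemma hw_mmorph v : mmorphism (hw v).
Proof.
split.
  by move=> m1 m2; rewrite /hw fmM big_cat.
by rewrite /hw fm1 big_nil.
Qed.

HB.instance Definition _ v := isMultiplicative.Build (fmonom nat) R (hw v) (hw_mmorph v).

Lemma malgC_comm (c : k) (y : R) : c%:MP * y = y * c%:MP.
Proof.
rewrite [y]monalgE big_distrl big_distrr /=; apply: eq_bigr => m _.
by rewrite !malgM_def !fgmulUU mulrC mul1m mulm1.
Qed.

Definition phi (v : nat -> R) (p : R) : R := mmap (@malgC _ k) (hw v) p.

Lemma phi_mult v : multiplicative (phi v).
Proof.
apply: (@commr_mmap_is_multiplicative _ _ _ (@malgC _ k) (hw v)).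
by move=> g m m'; rewrite /GRing.comm malgC_comm.
Qed.

Lemma phiD v : {morph phi v : p q / p + q}.
Proof. exact: mmapD. Qed.

Lemma phiM v p q : phi v (p * q) = phi v p * phi v q.
Proof. by case: (phi_mult v) => ->. Qed.

Lemma phiZ v (c : k) p : phi v (c *: p) = c *: phi v p.
Proof. by rewrite /phi mmapZ /= mul_malgC. Qed.

Lemma phiX v i : phi v (xvar k i) = v i.
Proof. by rewrite /phi /xvar mmapU /= mpolyC1E mul1r /hw fmU big_seq1. Qed.

Lemma nonunitalM (p q : R) : nonunital p -> nonunital (p * q).
Proof. by rewrite /nonunital => hp; rewrite (rmorphM (mcoeff (@fmone nat))) /= hp mul0r. Qed.

Lemma phi_coef1 v p : (forall i, nonunital (v i)) ->
  mcoeff (@fmone nat) (phi v p) = mcoeff (@fmone nat) p.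
Proof.
move=> hv; rewrite /phi mmapE raddf_sum /=.
rewrite (eq_bigr (fun m => p@_m * (m == @fmone nat)%:R)); last first.
  move=> m _; rewrite mul_malgC mcoeffZ; congr (_ * _).
  rewrite /hw; case: m => -[|i s] /=.
    rewrite big_nil mcoeff1; congr (_%:R).
  by rewrite fmoneE !fmP fm1.
  rewrite (big_cons (R:=ncpoly k)) (rmorphM (mcoeff (@fmone nat))) /= (hv i) mul0r.
  by case: eqP => // /(congr1 (@fmonom_val nat)); rewrite fm1.
have [h1|h1] := boolP ((@fmone nat) \in msupp p).
  rewrite (big_fsetD1 _ h1) /= eqxx mulr1 big_seq big1 ?addr0 // => m.
  by rewrite in_fsetD1 => /andP[/negbTE -> _]; rewrite mulr0.
rewrite big_seq big1 ?(mcoeff_outdom h1) // => m hm.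
have/negbTE-> : m != @fmone nat by apply: contraNneq h1 => <-.
by rewrite mulr0.
Qed.

Lemma phi_endo v : (forall i, nonunital (v i)) -> is_endo (phi v).
Proof.
move=> hv; split; first by move=> p; rewrite /nonunital phi_coef1.
split; first by move=> p q _ _; rewrite phiD.
split; first by move=> c p _; rewrite phiZ.
by move=> p q _ _; rewrite phiM.
Qed.
End Endo.
Section Comb.
Variable R : ringType.

Definition SS n (f : nat -> R) : R := \sum_(s : 'S_n) \prod_(i < n) f (s i).

Lemma sum_lift n (F : 'S_n.+1 -> R) :
  \sum_(s : 'S_n.+1) F s = \sum_(i : 'I_n.+1) \sum_(t : 'S_n) F (lift_perm i ord_max t).
Proof.
rewrite (partition_big (fun s : 'S_n.+1 => (s^-1)%g ord_max) predT) //=.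
apply: eq_bigr => i0 _.
have E : forall s : 'S_n.+1, ((s^-1)%g ord_max == i0) = (s i0 == ord_max).
  move=> s; apply/eqP/eqP => [<-|<-]; by rewrite ?permKV ?permK.
rewrite (eq_bigl (fun s : 'S_n.+1 => s i0 == ord_max)); last by move=> s; rewrite E.
set j0 := (ord_max : 'I_n.+1).
rewrite (reindex (lift_perm i0 j0)); last first.
  pose ulsf i (s : 'S_n.+1) k := odflt k (unlift (s i) (s (lift i k))).
  have ulsfK i (s : 'S_n.+1) k: lift (s i) (ulsf i s k) = s (lift i k).
    rewrite /ulsf; have:= neq_lift i k.
    by rewrite -(can_eq (permK s)) => /unlift_some[] ? ? ->.
  have inj_ulsf: injective (ulsf i0 _).
    move=> s; apply: can_inj (ulsf (s i0) s^-1%g) _ => k'.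
    by rewrite {1}/ulsf ulsfK !permK liftK.
  exists (fun s => perm (inj_ulsf s)) => [s _ | s].
    by apply/permP=> k'; rewrite permE /ulsf lift_perm_lift lift_perm_id liftK.
  move/(s _ =P _) => si0; apply/permP=> k.
  case: (unliftP i0 k) => [k'|] ->; rewrite ?lift_perm_id //.
  by rewrite lift_perm_lift -si0 permE ulsfK.
by apply: eq_bigl => t; rewrite lift_perm_id eqxx.
Qed.

Definition tnat n (t : 'S_n) (k : nat) : nat :=
  odflt 0%N (omap (fun o : 'I_n => val (t o)) (insub k)).

Lemma tnatE n (t : 'S_n) (j : 'I_n) : tnat t j = t j.
Proof. by rewrite /tnat valK. Qed.

Lemma prod_lift n (f : nat -> R) (i : 'I_n.+1) (t : 'S_n) :
  \prod_(k < n.+1) f (lift_perm i ord_max t k) =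
  (\prod_(0 <= k < i) f (tnat t k)) * f n * \prod_(i <= k < n) f (tnat t k).
Proof.
pose G k := f (if (k < i)%N then tnat t k else if k == i then n else tnat t k.-1).
have -> : \prod_(k < n.+1) f (lift_perm i ord_max t k) = \prod_(k < n.+1) G k.
  apply: eq_bigr => k _; rewrite /G.
  case: (unliftP i k) => [j|] ->.
    rewrite lift_perm_lift /= /bump.
    have tj := ltn_ord (t j).
    rewrite leqNgt tj add0n.
    case: (ltnP j i) => hji.
      by rewrite add0n hji tnatE.
    rewrite (_ : (true + j)%N = j.+1) // ltnNge (leqW hji) /=.
    by rewrite eqn_leq [(j < i)%N]ltnNge hji /= tnatE.
  by rewrite lift_perm_id ltnn eqxx.
rewrite -(big_mkord xpredT G) (@big_cat_nat _ _ _ i) /=; [|by []|by apply: ltnW].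
rewrite (big_ltn (ltn_ord i)) /= mulrA.
congr (_ * _ * _).
- by apply: eq_big_nat => k /andP[_ hk]; rewrite /G hk.
- by rewrite /G ltnn eqxx.
- rewrite big_add1 /=; apply: eq_big_nat => k /andP[hk _].
  rewrite /G ltnNge (leqW hk) /= eqn_leq [(k < i)%N]ltnNge hk /=.
  by [].

Qed.


Lemma split_ins n j (g : nat -> R) c : (j < n)%N ->
  \prod_(0 <= k < n) (if k == j then g k * c else g k) =
  (\prod_(0 <= k < j.+1) g k) * c * \prod_(j.+1 <= k < n) g k.
Proof.
move=> hj; rewrite (@big_cat_nat _ _ _ j.+1) //= big_nat_recr //= eqxx.
rewrite [in RHS]big_nat_recr //= !mulrA.
congr (_ * _ * _ * _).
- by apply: eq_big_nat => k /andP[_ hk]; rewrite (ltn_eqF hk).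
- by apply: eq_big_nat => k /andP[hk _]; rewrite (gtn_eqF hk).
Qed.

Lemma split_ins2 n j (g : nat -> R) c : (j < n)%N ->
  \prod_(0 <= k < n) (if k == j then c * g k else g k) =
  (\prod_(0 <= k < j) g k) * c * \prod_(j <= k < n) g k.
Proof.
move=> hj; rewrite (@big_cat_nat _ _ _ j) //=; last by apply: ltnW.
rewrite (big_ltn hj) (big_ltn hj) eqxx !mulrA.
congr (_ * _ * _ * _).
- by apply: eq_big_nat => k /andP[_ hk]; rewrite (ltn_eqF hk).
- by apply: eq_big_nat => k /andP[hk _]; rewrite (gtn_eqF hk).
Qed.

Lemma prod_tnat n (f : nat -> R) (t : 'S_n) :
  \prod_(0 <= k < n) f (tnat t k) = \prod_(k < n) f (t k).
Proof. by rewrite big_mkord; apply: eq_bigr => k _; rewrite tnatE. Qed.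

Lemma regroup n (f : nat -> R) (H : 'I_n -> 'S_n -> R) :
  (forall (j : 'I_n) (t : 'S_n), H j t =
     \prod_(k < n) (if k == j then f (t k) * f n else f (t k))) ->
  \sum_(j < n) \sum_(t : 'S_n) H j t =
  \sum_(c < n) SS n (fun l => if l == c then f l * f n else f l).
Proof.
move=> hH; rewrite /SS exchange_big /= [RHS]exchange_big /=.
apply: eq_bigr => t _.
rewrite [RHS](reindex_inj (@perm_inj _ t)) /=.
apply: eq_bigr => j _; rewrite hH; apply: eq_bigr => k _.
by rewrite -(inj_eq (@perm_inj _ t)).
Qed.

Lemma regroup2 n (f : nat -> R) (H : 'I_n -> 'S_n -> R) :
  (forall (j : 'I_n) (t : 'S_n), H j t =
     \prod_(k < n) (if k == j then f n * f (t k) else f (t k))) ->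
  \sum_(j < n) \sum_(t : 'S_n) H j t =
  \sum_(c < n) SS n (fun l => if l == c then f n * f l else f l).
Proof.
move=> hH; rewrite /SS exchange_big /= [RHS]exchange_big /=.
apply: eq_bigr => t _.
rewrite [RHS](reindex_inj (@perm_inj _ t)) /=.
apply: eq_bigr => j _; rewrite hH; apply: eq_bigr => k _.
by rewrite -(inj_eq (@perm_inj _ t)).
Qed.

Lemma SS_rec1 n (f : nat -> R) :
  SS n.+1 f = f n * SS n f +
    \sum_(c < n) SS n (fun l => if l == c then f l * f n else f l).
Proof.
rewrite {1}/SS sum_lift big_ord_recl; congr (_ + _).
  rewrite /SS big_distrr /=; apply: eq_bigr => t _.
  by rewrite prod_lift big_geq // mul1r prod_tnat.
pose H := fun (j : 'I_n) (t : 'S_n) =>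
  \prod_(i0 < n.+1) f (lift_perm (lift ord0 j) ord_max t i0).
transitivity (\sum_(j < n) \sum_(t : 'S_n) H j t); first by [].
apply: regroup => j t; rewrite /H; rewrite prod_lift /= /bump leq0n add1n.
rewrite -(split_ins (fun k => f (tnat t k))) ?ltn_ord //.
rewrite big_mkord; apply: eq_bigr => k _; by rewrite !tnatE.
Qed.

Lemma SS_rec2 n (f : nat -> R) :
  SS n.+1 f = SS n f * f n +
    \sum_(c < n) SS n (fun l => if l == c then f n * f l else f l).
Proof.
rewrite {1}/SS sum_lift big_ord_recr addrC; congr (_ + _); last first.
  rewrite /SS big_distrl /=; apply: eq_bigr => t _.
  by rewrite prod_lift /= [\prod_(n <= _ < n) _]big_geq // mulr1 prod_tnat.
pose H := fun (j : 'I_n) (t : 'S_n) =>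
  \prod_(i0 < n.+1) f (lift_perm (widen_ord (leqnSn n) j) ord_max t i0).
transitivity (\sum_(j < n) \sum_(t : 'S_n) H j t); first by [].
apply: regroup2 => j t; rewrite /H prod_lift /=.
rewrite -(split_ins2 (fun k => f (tnat t k))) ?ltn_ord //.
rewrite big_mkord; apply: eq_bigr => k _; by rewrite !tnatE.
Qed.

End Comb.

Section Main.
Variable k : fieldType.
Local Notation R := (ncpoly k).

Lemma xvar_nonunital i : nonunital (xvar k i).
Proof.
rewrite /nonunital /xvar mcoeffU.
by have := fm1_eq1 i => /= ->.
Qed.

Lemma R1_add d p q : R1 d p -> R1 d q -> @R1 k d (p + q).
Proof.
move=> hp hq V hV hg; have [_ [_ [hD _]]] := hV.
by apply: hD; [exact: hp V hV hg|exact: hq V hV hg].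
Qed.

Lemma R1_0 d : @R1 k d 0.
Proof. by move=> V [_ [h0 _]]. Qed.

Lemma R1_scale d c p : R1 d p -> @R1 k d (c *: p).
Proof.
move=> hp V hV hg; have [_ [_ [_ [hZ _]]]] := hV.
by apply: hZ; exact: hp V hV hg.
Qed.

Lemma R1_sub d p q : R1 d p -> R1 d q -> @R1 k d (p - q).
Proof. by move=> hp hq; rewrite -scaleN1r; apply: R1_add => //; apply: R1_scale. Qed.

Lemma R1_sum d (I : Type) (r : seq I) (F : I -> R) :
  (forall i, R1 d (F i)) -> R1 d (\sum_(i <- r) F i).
Proof.
move=> hF; elim: r => [|a r IH]; first by rewrite big_nil; apply: R1_0.
by rewrite big_cons; apply: R1_add.
Qed.

Lemma phi0 (v : nat -> R) : phi v 0 = 0.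
Proof. exact: mmap0. Qed.

Lemma phi1 (v : nat -> R) : phi v 1 = 1.
Proof. by case: (phi_mult v). Qed.

Lemma R1_subst d (v : nat -> R) : (forall i, nonunital (v i)) -> R1 d (Ssym d v).
Proof.
move=> hv.
have -> : Ssym d v = phi v (Ssym d (@xvar k)).
  rewrite /Ssym (big_morph (phi v) (phiD v) (phi0 v)); apply: eq_bigr => s _.
  rewrite (big_morph (phi v) (phiM v) (phi1 v)); apply: eq_bigr => i _.
  by rewrite phiX.
move=> V hV hg; case: hV => [_ [_ [_ [_ hE]]]]; apply: hE.
  exact: phi_endo.
exact: hg.
Qed.

End Main.

Lemma sub_tri (V : zmodType) (a b c : V) : b - c = (a - c) - (a - b).
Proof. by rewrite opprB [RHS]addrC addrA subrK. Qed.

Lemma R1_tri (k : fieldType) d (a b c : ncpoly k) :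
  R1 d (a - b) -> R1 d (a - c) -> R1 d (b - c).
Proof. by move=> h1 h2; rewrite (sub_tri a b c); apply: R1_sub. Qed.

Theorem corollary2p2 (k : fieldType) (d : nat) (hd : (0 < d)%N) :
  let Sd1 := Ssym d.+1 (@xvar k) in
  let Sdx := Ssym d (@xvar k) * xvar k d in
  let xSd := xvar k d * Ssym d (@xvar k) in
  @R1 k d (Sd1 - Sdx) /\ @R1 k d (Sdx - xSd) /\ @R1 k d (Sd1 - xSd).
Proof.
move=> Sd1 Sdx xSd.
have h1 : R1 d (Sd1 - Sdx).
  have -> : Sd1 - Sdx = \sum_(c < d) SS d (fun l => if l == c then xvar k d * xvar k l else xvar k l).
    apply/eqP; rewrite subr_eq addrC; apply/eqP.
    by rewrite /Sd1 /Sdx /Ssym -/(SS d.+1 _) SS_rec2 -/(SS d _).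
  apply: R1_sum => c; apply: R1_subst => l.
  case: ifP => _; last exact: xvar_nonunital.
  by apply: nonunitalM; apply: xvar_nonunital.
have h3 : R1 d (Sd1 - xSd).
  have -> : Sd1 - xSd = \sum_(c < d) SS d (fun l => if l == c then xvar k l * xvar k d else xvar k l).
    apply/eqP; rewrite subr_eq addrC; apply/eqP.
    by rewrite /Sd1 /xSd /Ssym -/(SS d.+1 _) SS_rec1 -/(SS d _).
  apply: R1_sum => c; apply: R1_subst => l.
  case: ifP => _; last exact: xvar_nonunital.
  by apply: nonunitalM; apply: xvar_nonunital.
split; first exact: h1.
split; last exact: h3.
exact: (R1_tri h1 h3).
Qed.
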